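(* Let $G=(V,E,L)$ be a complete hypergraph with loops, with $n:=|V|$ nodes, such that $L=L^+=\{\{j,j\}\}$ for some $j\in V$ (a single plus loop and no minus loops). Then $$\mathrm{PP}(G)=\Big\{z\in\mathbb{R}^{V\cup E\cup L}:\ z_{jj}\ \ge \sum_{J\subseteq V:\, j\in J}\frac{\big(\ell_n(J,V\setminus J)\big)^2}{\ell_{n-1}(J\setminus\{j\},V\setminus J)},\quad \ell_n(J,V\setminus J)\ge 0\ \ \forall J\subseteq V\Big\}.$$
   Context: A hypergraph with loops is a triple $G=(V,E,L)$ where $V$ is a finite node set, $E$ is a set of subsets of $V$ each of cardinality at least two (edges), and $L$ is a set of loops, each written $\{i,i\}$ for some $i\in V$ (at most one per node), partitioned as $L=L^-\cup L^+$ into minus loops and plus loops. $G$ is complete if $E$ consists of all subsets of $V$ of cardinality at least two. For such $G$, $$\mathrm{PP}(G):=\mathrm{conv}\Big\{z\in\mathbb{R}^{V\cup E\cup L}: z_{ii}\ge z_i^2\ \forall\{i,i\}\in L^+,\ z_{ii}\le z_i^2\ \forall \{i,i\}\in L^-,\ z_e=\prod_{i\in e}z_i\ \forall e\in E,\ z_i\in[0,1]\ \forall i\in V\Big\},$$ where coordinates are indexed by nodes ($z_i$), edges ($z_e$) and loops ($z_{ii}$). For a subset $S\subseteq V$ write $z_S$ with the conventions $z_\emptyset:=1$, $z_{\{i\}}:=z_i$, and $z_S$ the edge coordinate when $|S|\ge2$ (loop coordinates $z_{ii}$ are distinct from these). For disjoint $J_1,J_2\subseteq V$ with $|J_1\cup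 J_2|=d$, define $\ell_d(J_1,J_2):=\sum_{t\subseteq J_2}(-1)^{|t|}z_{J_1\cup t}$. Any expression $u^2/v$ denotes the closure of the perspective: it equals $u^2/v$ if $v>0$, $0$ if $u=v=0$, and $+\infty$ if $u\ne0$, $v=0$. *)

(* Defs.v *)
From HB Require Import structures.
From mathcomp Require Import all_boot all_order all_algebra.
From mathcomp Require Import reals constructive_ereal.
Set Implicit Arguments. Unset Strict Implicit. Unset Printing Implicit Defensive.
Import Order.TTheory GRing.Theory Num.Theory.
Local Open Scope ring_scope.

(* Node set V = 'I_n.  For the complete hypergraph, the node and edge
   coordinates are indexed exactly by the nonempty subsets of V
   (singletons {i} <-> node i, subsets of size >= 2 <-> edges). *)
Definition Idx (n : nat) := {S : {set 'I_n} | S != set0}.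

(* A point z of R^{V u E u L} with L = {{j,j}} is a pair (y, t) where
   y : Idx n -> R collects the node/edge coordinates and t = z_jj. *)

(* z_S with the convention z_emptyset = 1, z_{i} = z_i, z_S = edge coord. *)
Definition zS (R : realType) (n : nat) (y : Idx n -> R) (S : {set 'I_n}) : R :=
  match @insub _ (fun S : {set 'I_n} => S != set0) (Idx n) S with
  | Some s => y s
  | None => 1
  end.

(* ell_d(J1, J2) = sum_{t subset J2} (-1)^{|t|} z_{J1 u t}; d = |J1 u J2| is
   determined by J1, J2 and is left implicit. *)
Definition ell (R : realType) (n : nat) (y : Idx n -> R) (J1 J2 : {set 'I_n}) : R :=
  \sum_(T : {set 'I_n} | T \subset J2) (-1) ^+ #|T| * zS y (J1 :|: T).

Definition persp (R : realType) (u v : R) : \bar R :=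
  if 0 < v then (u ^+ 2 / v)%:E
  else if u == 0 then 0%E else (+oo)%E.

Definition PPgen (R : realType) (n : nat) (j : 'I_n)
    (y : Idx n -> R) (t : R) : Prop :=
  exists x : 'I_n -> R,
    (forall i, 0 <= x i <= 1) /\
    x j ^+ 2 <= t /\
    (forall S : Idx n, y S = \prod_(i in val S) x i).

Definition PP (R : realType) (n : nat) (j : 'I_n)
    (y : Idx n -> R) (t : R) : Prop :=
  exists (k : nat) (lam : 'I_k -> R) (ys : 'I_k -> Idx n -> R) (ts : 'I_k -> R),
    (forall l, 0 <= lam l) /\ \sum_(l < k) lam l = 1 /\
    (forall l, PPgen j (ys l) (ts l)) /\
    (forall S, y S = \sum_(l < k) lam l * ys l S) /\
    t = \sum_(l < k) lam l * ts l.

(* Main.v *)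
Require Import Defs.
From HB Require Import structures.
From mathcomp Require Import all_boot all_order all_algebra.
From mathcomp Require Import reals constructive_ereal.
From mathcomp Require Import ring lra.
From Stdlib Require Import IndefiniteDescription.
Import Order.TTheory GRing.Theory Num.Theory.
Local Open Scope ring_scope.

Definition Lop (R : realType) (n : nat) (f : {set 'I_n} -> R) (J1 J2 : {set 'I_n}) : R :=
  \sum_(T : {set 'I_n} | T \subset J2) (-1) ^+ #|T| * f (J1 :|: T).

Arguments Lop {R n}.

Lemma prod_bool (R : realType) (I : finType) (P : pred I) (c : I -> bool) :
  \prod_(i | P i) ((c i)%:R : R) = ([forall i, P i ==> c i])%:R.
Proof.
case: (boolP [forall i, P i ==> c i]) => H.
  by rewrite big1 // => i Pi; move/forallP: H => /(_ i); rewrite Pi /= => ->.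
move: H; rewrite negb_forall => /existsP [i]; rewrite negb_imply => /andP [Pi ci].
by rewrite (bigD1 i) //= (negbTE ci) mul0r.
Qed.

Lemma Lop_prod (R : realType) (n : nat) (x : 'I_n -> R) (J1 J2 : {set 'I_n}) :
  [disjoint J1 & J2] ->
  Lop (fun U => \prod_(i in U) x i) J1 J2 =
  \prod_i (if i \in J1 then x i else if i \in J2 then 1 - x i else 1).
Proof.
move=> dis.
pose F i := if i \in J1 then 0 else if i \in J2 then - x i else 0.
pose G i := if i \in J1 then x i else 1.
have -> : \prod_i (if i \in J1 then x i else if i \in J2 then 1 - x i else 1)
   = \prod_i (F i + G i).
  apply: eq_bigr => i _; rewrite /F /G.
  by case: (i \in J1); case: (i \in J2); rewrite ?add0r ?addr0 // addrC.
rewrite bigA_distr /Lop big_mkcond /=.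
apply: eq_bigr => K _; symmetry.
case: (boolP (K \subset J2)) => sK; last first.
  move/subsetPn: sK => [i iK niJ2].
  by rewrite (bigD1 i) //= iK /F (negbTE niJ2); case: (i \in J1); rewrite mul0r.
rewrite -prodr_const [\prod_(i in K) _]big_mkcond [\prod_(i in J1 :|: K) _]big_mkcond /= -big_split /=.
apply: eq_bigr => i _; rewrite /F /G inE.
case iK: (i \in K).
  have iJ2 : i \in J2 by apply: (subsetP sK).
  have niJ1 : i \notin J1.
    by rewrite (disjointFl dis iJ2).
  by rewrite (negbTE niJ1) iJ2 orbT mulN1r.
by rewrite orbF mul1r; case: (i \in J1).
Qed.

Lemma Lop_lin (R : realType) (n : nat) (I : finType) (c : I -> R)
   (f : I -> {set 'I_n} -> R) J1 J2 :
  Lop (fun U => \sum_k c k * f k U) J1 J2 = \sum_k c k * Lop (f k) J1 J2.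
Proof.
rewrite /Lop; under eq_bigr do rewrite mulr_sumr.
rewrite exchange_big /=; apply: eq_bigr => k _; rewrite mulr_sumr.
by apply: eq_bigr => T _; rewrite mulrCA.
Qed.

Lemma Lop_inj (R : realType) (n : nat) (f g : {set 'I_n} -> R) :
  (forall J, Lop f J (~: J) = Lop g J (~: J)) -> forall S, f S = g S.
Proof.
move=> hL.
suff H : forall k S, (#|~: S| < k)%N -> f S = g S.
  by move=> S; apply: (H (#|~: S|).+1).
elim=> [|k IH] S // hS.
have E (h : {set 'I_n} -> R) : Lop h S (~: S) = h S +
   \sum_(T : {set 'I_n} | (T \subset ~: S) && (T != set0)) (-1) ^+ #|T| * h (S :|: T).
  by rewrite /Lop (bigD1 set0) ?sub0set //= cards0 expr0 mul1r setU0.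
have := hL S; rewrite !E.
have -> : \sum_(T : {set 'I_n} | (T \subset ~: S) && (T != set0)) (-1) ^+ #|T| * f (S :|: T)
   = \sum_(T : {set 'I_n} | (T \subset ~: S) && (T != set0)) (-1) ^+ #|T| * g (S :|: T).
  apply: eq_bigr => T /andP [sT nT]; congr (_ * _); apply: IH.
  apply: (@leq_trans #|~: S|); last by rewrite -ltnS.
  apply: proper_card; apply/properP; split.
    by rewrite setCS subsetUl.
  move/set0Pn: nT => [x xT]; exists x; first exact: (subsetP sT).
  by rewrite !inE xT orbT.
by move/addIr.
Qed.

Lemma prod_ind (R : realType) (n : nat) (K U : {set 'I_n}) :
  \prod_(i in U) ((i \in K)%:R : R) = (U \subset K)%:R.
Proof.
rewrite prod_bool; congr (_%:R); congr nat_of_bool; apply/idP/idP.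
  by move=> /forallP H; apply/subsetP => i iU; move: (H i); rewrite iU.
by move=> /subsetP H; apply/forallP => i; apply/implyP => /H.
Qed.

Lemma Lop_ind (R : realType) (n : nat) (K J1 J2 : {set 'I_n}) :
  [disjoint J1 & J2] ->
  Lop (fun U => ((U \subset K)%:R : R)) J1 J2 =
  ((J1 \subset K) && [disjoint K & J2])%:R.
Proof.
move=> dis.
have := @Lop_prod R n (fun i => ((i \in K)%:R : R)) J1 J2 dis.
under [Lop _ _ _]eq_bigr do rewrite prod_ind.
rewrite /Lop => ->.
have -> : \prod_i (if i \in J1 then ((i \in K)%:R : R)
            else if i \in J2 then 1 - (i \in K)%:R else 1)
   = \prod_(i | true) (((i \in J1) ==> (i \in K)) && ((i \in J2) ==> (i \notin K)))%:R.
  apply: eq_bigr => i _.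
  case: (boolP (i \in J1)) => iJ1.
    by rewrite (disjointFr dis iJ1) /= andbT.
  by case: (i \in J2); case: (i \in K); rewrite /= ?subrr ?subr0.
rewrite prod_bool; congr (_%:R); congr nat_of_bool.
apply/idP/idP.
  move=> /forallP H; apply/andP; split.
    by apply/subsetP => i iJ1; move: (H i) => /andP [/implyP /(_ iJ1) -> _].
  rewrite disjoint_subset; apply/subsetP => i iK; rewrite inE.
  by apply/negP => iJ2; move: (H i) => /andP [_ /implyP /(_ iJ2)]; rewrite iK.
move=> /andP [sJ1 dK]; apply/forallP => i; apply/andP; split; apply/implyP => h.
  exact: (subsetP sJ1).
by rewrite (disjointFl dK h).
Qed.

Lemma zS_set0 (R : realType) (n : nat) (y : Idx n -> R) : zS y set0 = 1.
Proof. by rewrite /zS insubF // eqxx. Qed.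

Lemma zS_val (R : realType) (n : nat) (y : Idx n -> R) (S : Idx n) : zS y (val S) = y S.
Proof. by rewrite /zS valK. Qed.

Lemma disjC_sub (n : nat) (K J : {set 'I_n}) : [disjoint K & ~: J] = (K \subset J).
Proof. by rewrite disjoints_subset setCK. Qed.

Lemma mobius (R : realType) (n : nat) (y : Idx n -> R) (U : {set 'I_n}) :
  zS y U = \sum_K ell y K (~: K) * (U \subset K)%:R.
Proof.
apply: (@Lop_inj R n (zS y) (fun U => \sum_K ell y K (~: K) * (U \subset K)%:R)).
move=> J; rewrite Lop_lin.
under eq_bigr do rewrite Lop_ind ?disjC_sub ?subxx //.
rewrite (bigD1 J) //= ?disjC_sub !subxx /= mulr1 big1 ?addr0 //.
move=> K nKJ; rewrite ?disjC_sub -eqEsubset eq_sym (negbTE nKJ) /=.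
by rewrite mulr0.
Qed.

Lemma sum_p (R : realType) (n : nat) (y : Idx n -> R) :
  \sum_K ell y K (~: K) = 1.
Proof.
rewrite -(@zS_set0 R n y) mobius; apply: eq_bigr => K _.
by rewrite sub0set mulr1.
Qed.

Lemma ell_gen (R : realType) (n : nat) (y : Idx n -> R) (J1 J2 : {set 'I_n}) :
  [disjoint J1 & J2] ->
  ell y J1 J2 = \sum_K ell y K (~: K) * ((J1 \subset K) && [disjoint K & J2])%:R.
Proof.
move=> dis.
have -> : ell y J1 J2 = Lop (fun U => \sum_K ell y K (~: K) * (U \subset K)%:R) J1 J2.
  by rewrite /ell /Lop; apply: eq_bigr => T _; rewrite mobius.
rewrite Lop_lin; apply: eq_bigr => K _; by rewrite Lop_ind.
Qed.

Lemma ell_q (R : realType) (n : nat) (y : Idx n -> R) (j : 'I_n) (J : {set 'I_n}) :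
  j \in J -> ell y (J :\ j) (~: J) = ell y J (~: J) + ell y (J :\ j) (~: (J :\ j)).
Proof.
move=> jJ.
rewrite ell_gen ?disjC_sub ?subD1set //.
have nJ : (J :\ j) != J.
  by apply/eqP => /setP /(_ j); rewrite !inE eqxx jJ.
rewrite (bigD1 J) //= (bigD1 (J :\ j)) //= !disjC_sub !subD1set !subxx /=.
rewrite !mulr1 big1 ?addr0 // => K /andP [nKJ nKJj].
rewrite disjC_sub; case: (boolP ((J :\ j \subset K) && (K \subset J))); last by rewrite mulr0.
move=> /andP [s1 s2]; exfalso.
case: (boolP (j \in K)) => jK.
  move/negP: nKJ; apply; rewrite eqEsubset s2 /=.
  apply/subsetP => i iJ; case: (eqVneq i j) => [-> //|ij].
  by apply: (subsetP s1); rewrite !inE ij.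
move/negP: nKJj; apply; rewrite eqEsubset s1 andbT.
apply/subsetP => i iK; rewrite !inE (subsetP s2 _ iK) andbT.
by apply/eqP => eij; move: jK; rewrite -eij iK.
Qed.

Lemma persp_le (R : realType) (I : finType) (lam a Q : I -> R) :
  (forall l, 0 <= lam l) -> (forall l, 0 <= Q l) ->
  (persp (\sum_l lam l * (a l * Q l)) (\sum_l lam l * Q l)
     <= (\sum_l lam l * (a l ^+ 2 * Q l))%:E)%E.
Proof.
move=> hl hQ.
set V := \sum_l lam l * Q l; set U := \sum_l lam l * (a l * Q l).
set W := \sum_l lam l * (a l ^+ 2 * Q l).
have V0 : 0 <= V by apply: sumr_ge0 => l _; apply: mulr_ge0.
have W0 : 0 <= W.
  by apply: sumr_ge0 => l _; apply: mulr_ge0 => //; apply: mulr_ge0 => //; apply: sqr_ge0.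
rewrite /persp; case: ifP => hV.
  rewrite lee_fin.
  set c := U / V.
  have key : 0 <= \sum_l lam l * Q l * (a l - c) ^+ 2.
    by apply: sumr_ge0 => l _; apply: mulr_ge0; [apply: mulr_ge0|apply: sqr_ge0].
  have expand : \sum_l lam l * Q l * (a l - c) ^+ 2 = W - 2 * c * U + c ^+ 2 * V.
    transitivity (\sum_l ((lam l * (a l ^+ 2 * Q l) - (2 * c) * (lam l * (a l * Q l)))
                   + c ^+ 2 * (lam l * Q l))).
      by apply: eq_bigr => l _; ring.
    by rewrite big_split sumrB /= -!mulr_sumr.
  have e2 : W - 2 * c * U + c ^+ 2 * V = W - U ^+ 2 / V.
    rewrite /c; field; exact: lt0r_neq0.
  by rewrite -subr_ge0 -e2 -expand.
have V00 : V = 0.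
  by apply/eqP; rewrite eq_le V0 andbT leNgt hV.
have hz : forall l, lam l * Q l = 0.
  have H0 : forall i, true -> 0 <= lam i * Q i by move=> i _; apply: mulr_ge0.
  move=> l; exact: (psumr_eq0P H0 V00).
have -> : U = 0.
  by rewrite /U big1 // => l _; rewrite mulrCA hz mulr0.
by rewrite eqxx lee_fin.
Qed.

Definition Gp (R : realType) (n : nat) (x : 'I_n -> R) (J1 J2 : {set 'I_n}) : R :=
  \prod_i (if i \in J1 then x i else if i \in J2 then 1 - x i else 1).

Arguments Gp {R n}.

Lemma sumQ (R : realType) (n : nat) (x : 'I_n -> R) (j : 'I_n) :
  \sum_(J : {set 'I_n} | j \in J) Gp x (J :\ j) (~: J) = 1.
Proof.
pose F i := if i == j then 1 else x i.
pose G i := if i == j then 0 else 1 - x i.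
have : \prod_i (F i + G i) = 1.
  by apply: big1 => i _; rewrite /F /G; case: (i == j); rewrite ?addr0 // addrC subrK.
rewrite bigA_distr => <-.
rewrite big_mkcond /=; apply: eq_bigr => K _.
case: (boolP (j \in K)) => jK; last first.
  by rewrite (bigD1 j) //= (negbTE jK) /G eqxx mul0r.
apply: eq_bigr => i _; rewrite /F /G in_setD1 in_setC.
case: (eqVneq i j) => [->|ij] /=; first by rewrite jK.
by case: (i \in K).
Qed.

Lemma Gp_ge0 (R : realType) (n : nat) (x : 'I_n -> R) (J1 J2 : {set 'I_n}) :
  (forall i, 0 <= x i <= 1) -> 0 <= Gp x J1 J2.
Proof.
move=> hx; apply: prodr_ge0 => i _; have /andP [h0 h1] := hx i.
by case: (i \in J1) => //; case: (i \in J2) => //; rewrite subr_ge0.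
Qed.

Lemma Gp_split (R : realType) (n : nat) (x : 'I_n -> R) (j : 'I_n) (J : {set 'I_n}) :
  j \in J -> Gp x J (~: J) = x j * Gp x (J :\ j) (~: J).
Proof.
move=> jJ; rewrite /Gp (bigD1 j) //= jJ; congr (_ * _).
rewrite [RHS](bigD1 j) //= in_setD1 in_setC eqxx jJ /= mul1r.
apply: eq_bigr => i ij; by rewrite in_setD1 ij.
Qed.

Lemma sum_ev (R : realType) (I : finType) (F : I -> R) :
  \sum_l F l = \sum_(m < #|I|) F (enum_val m).
Proof. by rewrite -(big_enum_val (A := I)). Qed.

Lemma PP_of_fin (R : realType) (n : nat) (j : 'I_n) (y : Idx n -> R) (t : R)
  (I : finType) (lam : I -> R) (xs : I -> 'I_n -> R) (ts : I -> R) :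
  (forall l, 0 <= lam l) -> \sum_l lam l = 1 ->
  (forall l i, 0 <= xs l i <= 1) -> (forall l, xs l j ^+ 2 <= ts l) ->
  (forall S, y S = \sum_l lam l * \prod_(i in val S) xs l i) ->
  t = \sum_l lam l * ts l -> PP j y t.
Proof.
move=> hl h1 hx hxt hy ht.
exists #|I|, (fun m : 'I_#|I| => lam (enum_val m)),
  (fun (m : 'I_#|I|) (S : Idx n) => \prod_(i in val S) xs (enum_val m) i),
  (fun m : 'I_#|I| => ts (enum_val m)).
split; first by move=> m.
split; first by rewrite -sum_ev.
split.
  move=> m; exists (xs (enum_val m)); split => //.
split; first by move=> S; rewrite hy sum_ev.
by rewrite ht sum_ev.
Qed.

Lemma mul_div_id (R : realType) (p q : R) : 0 <= p -> p <= q -> q * (p / q) = p.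
Proof.
move=> p0 pq; case: (eqVneq q 0) => [q0|q0].
  have -> : p = 0 by apply/eqP; rewrite eq_le p0 andbT -q0.
  by rewrite q0 !mul0r.
by rewrite mulrC divfK.
Qed.

Lemma div_01 (R : realType) (p q : R) : 0 <= p -> p <= q -> 0 <= p / q <= 1.
Proof.
move=> p0 pq; case: (eqVneq q 0) => [->|q0]; first by rewrite invr0 mulr0 lexx ler01.
have qp : 0 < q by rewrite lt_neqAle eq_sym q0 (le_trans p0 pq).
by rewrite divr_ge0 ?(ltW qp) //= ler_pdivrMr // mul1r.
Qed.

Lemma fwd (R : realType) (n : nat) (j : 'I_n) (y : Idx n -> R) (t : R) :
  PP j y t ->
  ((\sum_(J : {set 'I_n} | j \in J)
       persp (ell y J (~: J)) (ell y (J :\ j) (~: J)) <= t%:E)%E /\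
   (forall J : {set 'I_n}, 0 <= ell y J (~: J))).
Proof.
case=> k [lam [ys [ts [hl [h1 [hg [hy ht]]]]]]].
have hx : forall l, {x : 'I_n -> R | (forall i, 0 <= x i <= 1) /\ x j ^+ 2 <= ts l /\
                     (forall S, ys l S = \prod_(i in val S) x i)}.
  by move=> l; apply: constructive_indefinite_description; exact: hg l.
pose x l := sval (hx l).
have hx01 l : forall i, 0 <= x l i <= 1 by case: (svalP (hx l)).
have hxt l : x l j ^+ 2 <= ts l by case: (svalP (hx l)) => _ [].
have hys l S : ys l S = \prod_(i in val S) x l i by case: (svalP (hx l)) => _ [_ ->].
have hz U : zS y U = \sum_l lam l * \prod_(i in U) x l i.
  case: (boolP (U != set0)) => hU.
    change U with (val (exist (fun S : {set 'I_n} => S != set0) U hU : Idx n)).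
    rewrite zS_val hy; apply: eq_bigr => l _; by rewrite hys.
  move: hU; rewrite negbK => /eqP ->; rewrite zS_set0.
  by under eq_bigr do rewrite big_set0 mulr1; rewrite h1.
have hell (J1 J2 : {set 'I_n}) : [disjoint J1 & J2] -> ell y J1 J2 = \sum_l lam l * Gp (x l) J1 J2.
  move=> dis.
  have -> : ell y J1 J2 = Lop (fun U => \sum_l lam l * \prod_(i in U) x l i) J1 J2.
    by rewrite /ell /Lop; apply: eq_bigr => T _; rewrite hz.
  by rewrite Lop_lin; apply: eq_bigr => l _; rewrite Lop_prod.
split; last first.
  move=> J; rewrite hell ?disjC_sub ?subxx //; apply: sumr_ge0 => l _.
  by apply: mulr_ge0 => //; exact: Gp_ge0.
have H1 : (\sum_(J : {set 'I_n} | j \in J)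
       persp (ell y J (~: J)) (ell y (J :\ j) (~: J)) <=
    \sum_(J : {set 'I_n} | j \in J)
       (\sum_l lam l * (x l j ^+ 2 * Gp (x l) (J :\ j) (~: J)))%:E)%E.
  apply: lee_sum => J jJ.
  rewrite (hell J) ?disjC_sub ?subxx // (hell (J :\ j)) ?disjC_sub ?subD1set //.
  under eq_bigr do rewrite (@Gp_split R n _ j J jJ).
  by apply: persp_le => // l; exact: Gp_ge0.
apply: (le_trans H1).
rewrite sumEFin lee_fin exchange_big /= ht.
apply: ler_sum => l _.
rewrite (eq_bigr (fun J => lam l * x l j ^+ 2 * Gp (x l) (J :\ j) (~: J))); last first.
  by move=> J _; rewrite mulrA.
rewrite -mulr_sumr sumQ mulr1.
by rewrite ler_wpM2l.
Qed.

Lemma bwd (R : realType) (n : nat) (j : 'I_n) (y : Idx n -> R) (t : R) :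
  ((\sum_(J : {set 'I_n} | j \in J)
       persp (ell y J (~: J)) (ell y (J :\ j) (~: J)) <= t%:E)%E) ->
   (forall J : {set 'I_n}, 0 <= ell y J (~: J)) -> PP j y t.
Proof.
move=> hS hp.
pose p J := ell y J (~: J).
pose q J := ell y (J :\ j) (~: J).
have hq (K : {set 'I_n}) : j \in K -> q K = p K + p (K :\ j) by move=> jK; rewrite /q ell_q.
have hpq (K : {set 'I_n}) : j \in K -> p K <= q K.
  by move=> jK; rewrite hq // lerDl; apply: hp.
have hq0 (K : {set 'I_n}) : j \in K -> 0 <= q K.
  by move=> jK; apply: le_trans (hpq K jK); apply: hp.
pose lm (K : {set 'I_n}) := if j \in K then p K / q K else 0.
pose w (K : {set 'I_n}) := if j \in K then q K else 0.
pose S0 := \sum_(K : {set 'I_n} | j \in K) q K * lm K ^+ 2.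
pose xs (K : {set 'I_n}) (i : 'I_n) := if i == j then lm K else ((i \in K)%:R : R).
pose ts (K : {set 'I_n}) := lm K ^+ 2 + (t - S0).
have hlm (K : {set 'I_n}) : 0 <= lm K <= 1.
  rewrite /lm; case: ifP => jK; last by rewrite lexx ler01.
  by apply: div_01; [apply: hp | apply: hpq].
have hqlm (K : {set 'I_n}) : j \in K -> q K * lm K = p K.
  by move=> jK; rewrite /lm jK mul_div_id //; [apply: hp | apply: hpq].
have hS0 : S0 <= t.
  rewrite -lee_fin /S0 -sumEFin; apply: le_trans hS; rewrite le_eqVlt; apply/orP; left.
  apply/eqP; apply: eq_bigr => K jK.
  rewrite /persp -/(p K) -/(q K).
  case: ifP => qpos.
    congr (_%:E); rewrite /lm jK; field; exact: lt0r_neq0.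
  have q0 : q K = 0 by apply/eqP; rewrite eq_le hq0 // andbT leNgt qpos.
  have p0 : p K = 0.
    by apply/eqP; rewrite eq_le hp andbT -q0 hpq.
  by rewrite p0 eqxx q0 mul0r.
have hG (K J : {set 'I_n}) : j \in K -> Gp (xs K) J (~: J) =
   if K == j |: J then (if j \in J then lm K else 1 - lm K) else 0.
  move=> jK; case: eqP => [->|nK].
    rewrite /Gp (bigD1 j) //= in_setC /xs eqxx.
    rewrite big1 ?mulr1; first by case: (j \in J).
    move=> i ij; rewrite (negbTE ij) !inE (negbTE ij) /=.
    by case: (i \in J); rewrite ?subr0.
  case: (boolP [exists i, (i \in K) != (i \in j |: J)]) => [/existsP [i hi]|/existsPn hn];
    last by exfalso; apply: nK; apply/setP => i; move: (hn i); rewrite negbK => /eqP.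
  have ij : i != j by apply/eqP => eij; move: hi; rewrite eij jK !inE eqxx.
  rewrite /Gp (bigD1 i) //= in_setC /xs (negbTE ij).
  move: hi; rewrite !inE (negbTE ij) /=.
  by case: (i \in J); case: (i \in K); rewrite //= ?subrr mul0r.
pose f3 (U : {set 'I_n}) := \sum_K w K * \prod_(i in U) xs K i.
have hL (J : {set 'I_n}) : Lop (zS y) J (~: J) = Lop f3 J (~: J).
  rewrite Lop_lin.
  under eq_bigr do rewrite Lop_prod ?disjC_sub ?subxx //.
  rewrite (bigD1 (j |: J)) //= [X in _ + X]big1 ?addr0; last first.
    move=> K nK; rewrite /w; case: ifP => jK; last by rewrite mul0r.
    by rewrite -/(Gp (xs K) J (~: J)) hG // (negbTE nK) mulr0.
  rewrite /w setU11 -/(Gp (xs (j |: J)) J (~: J)) hG ?setU11 // eqxx.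
  case: (boolP (j \in J)) => jJ.
    have e : j |: J = J by apply/setUidPr; rewrite sub1set.
    by rewrite e hqlm.
  rewrite mulrBr mulr1 hqlm ?setU11 // hq ?setU11 // setU1K //.
  by rewrite addrC addKr.
have hz := @Lop_inj R n _ _ hL.
have hw : \sum_K w K = 1.
  have := hz set0; rewrite zS_set0 /f3 => ->.
  by apply: eq_bigr => K _; rewrite big_set0 mulr1.
apply: (@PP_of_fin R n j y t _ w xs ts).
- by move=> K; rewrite /w; case: ifP => // jK; apply: hq0.
- exact: hw.
- move=> K i; rewrite /xs; case: (i == j) => //.
  by case: (i \in K); rewrite /= ?lexx ?ler01.
- by move=> K; rewrite /xs /ts eqxx lerDl subr_ge0.
- by move=> S; rewrite -zS_val hz.
rewrite /ts.
under eq_bigr do rewrite mulrDr.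
rewrite big_split /= -mulr_suml hw mul1r.
rewrite /S0 [in RHS]big_mkcond /=.
have -> : \sum_(i : {set 'I_n}) w i * lm i ^+ 2 = \sum_(i : {set 'I_n}) (if j \in i then q i * lm i ^+ 2 else 0).
  by apply: eq_bigr => K _; rewrite /w; case: ifP => //; rewrite mul0r.
by rewrite -big_mkcond /= addrC subrK.
Qed.

Theorem theorem1 (R : realType) (n : nat) (j : 'I_n) (y : Idx n -> R) (t : R) :
  PP j y t <->
  ((\sum_(J : {set 'I_n} | j \in J)
       persp (ell y J (~: J)) (ell y (J :\ j) (~: J)) <= t%:E)%E /\
   (forall J : {set 'I_n}, 0 <= ell y J (~: J))).
Proof.
split; first exact: fwd.
by case=> h1 h2; apply: bwd.
Qed.
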